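(* Let $d\ge 1$ and $N_1,\ldots,N_d\ge 1$ be integers. For each $j\in\{1,\ldots,d\}$ let $p_j,q_j:\{0,1,\ldots,N_j\}\to[0,1]$ satisfy $p_j(0)=q_j(0)=p_j(N_j)=q_j(N_j)=0$, $p_j(i)>0$ and $q_j(i)>0$ for $1\le i\le N_j-1$, and assume $\sum_{k=1}^d\big(p_k(i_k)+q_k(i_k)\big)\le 1$ for every $(i_1,\ldots,i_d)$ with $1\le i_k\le N_k$. Let $Z'$ be the Markov chain on $\mathbb E'=\{(i_1,\ldots,i_d):1\le i_j\le N_j,\ 1\le j\le d\}\cup\{-\infty\}$ with transition probabilities, for $(i_1,\ldots,i_d)\ne-\infty$: $P((i_1,\ldots,i_d),(i_1,\ldots,i_d)+\mathbf s_j)=p_j(i_j)$; $P((i_1,\ldots,i_d),(i_1,\ldots,i_d)-\mathbf s_j)=q_j(i_j)$ whenever $i_j\ge 2$; $P((i_1,\ldots,i_d),-\infty)=\sum_{j:\,i_j=1}q_j(1)$; $P((i_1,\ldots,i_d),(i_1,\ldots,i_d))=1-\sum_{k=1}^d\big(p_k(i_k)+q_k(i_k)\big)$; all other transitions from $(i_1,\ldots,i_d)$ have probability $0$; and $P(-\infty,-\infty)=1$. Here $\mathbf s_j$ is the $j$-th unit vector. (Then $(N_1,\ldots,N_d)$ and $-\infty$ are absorbing.) For $\tau_{\mathbf e}=\inf\{n\ge 0: Z'_n=\mathbf e\}$, define $\rho((i_1,\ldots,i_d))=P\big(\tau_{(N_1,\ldots,N_d)}<\tau_{-\infty}\mid Z'_0=(i_1,\ldots,i_d)\big)$.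 Then for every $(i_1,\ldots,i_d)$ with $1\le i_j\le N_j$, $$\rho((i_1,\ldots,i_d))=\frac{\prod_{j=1}^d\left(\sum_{n_j=1}^{i_j}\prod_{r=1}^{n_j-1}\frac{q_j(r)}{p_j(r)}\right)}{\prod_{j=1}^d\left(\sum_{n_j=1}^{N_j}\prod_{r=1}^{n_j-1}\frac{q_j(r)}{p_j(r)}\right)},$$ with empty products equal to $1$.
   Context: Interpretation: one player plays against $d$ others; $i_j$ is the player's current fortune against player $j$, $N_j$ the total money in that pair; reaching $i_j=0$ for some $j$ means losing (state $-\infty$), reaching $(N_1,\ldots,N_d)$ means winning. *)

(* Defs.v *)
From Stdlib Require Import Reals List Arith.
Import ListNotations.
Open Scope R_scope.

Definition sumR (l : list nat) (f : nat -> R) : R := fold_right (fun k acc => f k + acc) 0 l.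
Definition prodR (l : list nat) (f : nat -> R) : R := fold_right (fun k acc => f k * acc) 1 l.

(* Coordinates are indexed by j = 1..d; a state (i_1,...,i_d) is a function
   i : nat -> nat (only the values at 1..d matter).  The state space E' is
   option (nat -> nat), with None = -infinity. *)

Definition upd (i : nat -> nat) (j v : nat) : nat -> nat :=
  fun k => if Nat.eqb k j then v else i k.

Definition is_top (d : nat) (N : nat -> nat) (i : nat -> nat) : bool :=
  forallb (fun j => Nat.eqb (i j) (N j)) (seq 1 d).

Definition trans (d : nat) (p q : nat -> nat -> R) (i : nat -> nat)
  : list (R * option (nat -> nat)) :=
  map (fun j => (p j (i j), Some (upd i j (S (i j))))) (seq 1 d)
  ++ flat_map (fun j => if Nat.leb 2 (i j)
                        then [(q j (i j), Some (upd i j (pred (i j))))] else [])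
              (seq 1 d)
  ++ [ (sumR (seq 1 d) (fun j => if Nat.eqb (i j) 1%nat then q j 1%nat else 0), None) ;
       (1 - sumR (seq 1 d) (fun k => p k (i k) + q k (i k)), Some i) ].

(* hit d N p q n x = P( tau_{(N_1..N_d)} <= n  and  tau_{(N_1..N_d)} < tau_{-inf} | Z'_0 = x ),
   computed by first-step decomposition of the n-step path probability. *)
Fixpoint hit (d : nat) (N : nat -> nat) (p q : nat -> nat -> R) (n : nat)
  (x : option (nat -> nat)) {struct n} : R :=
  match x with
  | None => 0
  | Some i =>
      if is_top d N i then 1 else
      match n with
      | O => 0
      | S m => fold_right (fun py acc => fst py * hit d N p q m (snd py) + acc) 0
                          (trans d p q i)
      end
  end.

Definition Ssum (p q : nat -> nat -> R) (j m : nat) : R :=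
  sumR (seq 1 m) (fun n => prodR (seq 1 (n - 1)) (fun r => q j r / p j r)).

(* Main.v *)
Require Import Defs.
From Stdlib Require Import Reals List Arith Lia Lra ClassicalEpsilon FunctionalExtensionality.
Import ListNotations.
Open Scope R_scope.

Definition FS {A} (g : A -> R) (l : list (R * A)) : R :=
  fold_right (fun py acc => fst py * g (snd py) + acc) 0 l.

Lemma FS_app {A} (g : A -> R) l1 l2 : FS g (l1 ++ l2) = FS g l1 + FS g l2.
Proof. induction l1; simpl; [ring|]. unfold FS in *; simpl. rewrite IHl1; ring. Qed.

Lemma FS_map {A} (g : A -> R) (h : nat -> R * A) l :
  FS g (map h l) = sumR l (fun j => fst (h j) * g (snd (h j))).
Proof. induction l; simpl; auto. unfold FS in *; simpl. rewrite IHl; ring. Qed.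

Lemma sumR_plus l f g : sumR l (fun k => f k + g k) = sumR l f + sumR l g.
Proof. induction l; simpl; [ring|]. rewrite IHl; ring. Qed.
Lemma sumR_scal l f c : sumR l (fun k => f k * c) = sumR l f * c.
Proof. induction l; simpl; [ring|]. rewrite IHl; ring. Qed.
Lemma sumR_ext l f g : (forall k, In k l -> f k = g k) -> sumR l f = sumR l g.
Proof. induction l; simpl; intros H; auto. rewrite H, IHl; auto. Qed.
Lemma sumR_app l1 l2 f : sumR (l1 ++ l2) f = sumR l1 f + sumR l2 f.
Proof. induction l1; simpl; [ring|]. rewrite IHl1; ring. Qed.
Lemma prodR_ext l f g : (forall k, In k l -> f k = g k) -> prodR l f = prodR l g.
Proof. induction l; simpl; intros H; auto. rewrite H, IHl; auto. Qed.
Lemma prodR_app l1 l2 f : prodR (l1 ++ l2) f = prodR l1 f * prodR l2 f.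
Proof. induction l1; simpl; [ring|]. rewrite IHl1; ring. Qed.
Lemma prodR_pos l f : (forall k, In k l -> 0 < f k) -> 0 < prodR l f.
Proof. induction l; simpl; intros H; [lra|]. apply Rmult_lt_0_compat; auto. Qed.
Lemma sumR_nonneg l f : (forall k, In k l -> 0 <= f k) -> 0 <= sumR l f.
Proof. induction l; simpl; intros H; [lra|]. pose proof (H a (or_introl eq_refl)).
  pose proof (IHl (fun k h => H k (or_intror h))). lra. Qed.

Lemma FS_mono {A} (u w : A -> R) l :
  (forall py, In py l -> 0 <= fst py /\ (fst py = 0 \/ u (snd py) <= w (snd py))) ->
  FS u l <= FS w l.
Proof. induction l as [|[a y] l IH]; simpl; intros H; unfold FS; simpl; [lra|].
  fold (FS u l) (FS w l). specialize (IH (fun py h => H py (or_intror h))).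
  destruct (H (a,y) (or_introl eq_refl)) as [H1 [H2|H2]]; simpl in *.
  - subst; lra.
  - pose proof (Rmult_le_compat_l a _ _ H1 H2). lra. Qed.

Lemma FS_lin {A} (g : A -> R) c l : FS (fun y => g y - c) l = FS g l - c * FS (fun _ => 1) l.
Proof. induction l; unfold FS in *; simpl; [ring|]. rewrite IHl; ring. Qed.

Lemma FS_nonpos {A} (h : A -> R) l :
  (forall py, In py l -> fst py * h (snd py) <= 0) -> FS h l <= 0.
Proof. induction l as [|a l IH]; intros H; unfold FS; simpl; [lra|]. fold (FS h l).
  pose proof (H a (or_introl eq_refl)). pose proof (IH (fun py h => H py (or_intror h))). lra. Qed.

Lemma FS_zero_terms {A} (h : A -> R) l :
  (forall py, In py l -> fst py * h (snd py) <= 0) -> FS h l = 0 ->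
  forall py, In py l -> fst py * h (snd py) = 0.
Proof. induction l as [|a l IH]; simpl; intros H E py Hin; [contradiction|].
  unfold FS in E; simpl in E; fold (FS h l) in E.
  pose proof (FS_nonpos h l (fun py h => H py (or_intror h))).
  pose proof (H a (or_introl eq_refl)).
  destruct Hin as [<-|Hin]; [lra|]. apply IH; auto; lra. Qed.

Lemma FS_cv {A} (u : nat -> A -> R) (L : A -> R) l :
  (forall py, In py l -> fst py = 0 \/ Un_cv (fun n => u n (snd py)) (L (snd py))) ->
  Un_cv (fun n => FS (u n) l) (FS L l).
Proof. induction l as [|[a y] l IH]; simpl; intros H; unfold FS; simpl.
  - intros e He; exists 0%nat; intros; unfold R_dist; rewrite Rminus_diag, Rabs_R0; lra.
  - fold (FS L l). change (Un_cv (fun n => a * u n y + FS (u n) l) (a * L y + FS L l)).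
    apply CV_plus; [|apply IH; auto].
    destruct (H (a,y) (or_introl eq_refl)) as [E|E]; simpl in E.
    + subst. intros e He; exists 0%nat; intros; unfold R_dist.
      replace (0 * u n y - 0 * L y) with 0 by ring. rewrite Rabs_R0; lra.
    + apply CV_mult; auto. intros e He; exists 0%nat; intros; unfold R_dist.
      rewrite Rminus_diag, Rabs_R0; lra. Qed.

Lemma exists_max {A} (l : list A) (h : A -> R) (a : A) : In a l ->
  exists x, In x l /\ forall y, In y l -> h y <= h x.
Proof. revert a. induction l as [|b l IH]; simpl; intros a0 Ha; [contradiction|].
  destruct l as [|c l'].
  - exists b; split; auto. intros y [<-|[]]; lra.
  - destruct (IH c (or_introl eq_refl)) as [x [Hx Hm]].
    destruct (Rle_dec (h b) (h x)).
    + exists x; split; auto. intros y [<-|Hy]; auto.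
    + exists b; split; auto. intros y [<-|Hy]; [lra|]. specialize (Hm y Hy); lra. Qed.

Lemma cv_shift (u : nat -> R) l : Un_cv u l -> Un_cv (fun n => u (S n)) l.
Proof. intros H e He. destruct (H e He) as [M HM]. exists M; intros; apply HM; lia. Qed.

Record Hyp (d : nat) (N : nat -> nat) (p q : nat -> nat -> R) : Prop := {
  hN : forall j, (1 <= j <= d)%nat -> (1 <= N j)%nat;
  hp01 : forall j i, (1 <= j <= d)%nat -> (i <= N j)%nat -> 0 <= p j i <= 1;
  hq01 : forall j i, (1 <= j <= d)%nat -> (i <= N j)%nat -> 0 <= q j i <= 1;
  hbd : forall j, (1 <= j <= d)%nat ->
           p j 0%nat = 0 /\ q j 0%nat = 0 /\ p j (N j) = 0 /\ q j (N j) = 0;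
  hpos : forall j i, (1 <= j <= d)%nat -> (1 <= i <= N j - 1)%nat ->
           0 < p j i /\ 0 < q j i;
  hsum : forall i : nat -> nat, (forall k, (1 <= k <= d)%nat -> (1 <= i k <= N k)%nat) ->
           sumR (seq 1 d) (fun k => p k (i k) + q k (i k)) <= 1 }.

Definition inr (d : nat) (N : nat -> nat) (f : nat -> nat) :=
  forall j, (1 <= j <= d)%nat -> (1 <= f j <= N j)%nat.
Definition sameout (d : nat) (f g : nat -> nat) :=
  forall m, ~ (1 <= m <= d)%nat -> f m = g m.

Lemma FS_flat_map {A} (g : A -> R) (F : nat -> list (R * A)) l :
  FS g (flat_map F l) = sumR l (fun j => FS g (F j)).
Proof. induction l; simpl; auto. rewrite FS_app, IHl; ring. Qed.

Lemma fold_trans d p q i (g : option (nat -> nat) -> R) :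
  FS g (trans d p q i) =
  sumR (seq 1 d) (fun j => p j (i j) * g (Some (upd i j (S (i j)))))
  + sumR (seq 1 d) (fun j => if Nat.leb 2 (i j) then q j (i j) * g (Some (upd i j (pred (i j)))) else 0)
  + sumR (seq 1 d) (fun j => if Nat.eqb (i j) 1 then q j 1%nat else 0) * g None
  + (1 - sumR (seq 1 d) (fun k => p k (i k) + q k (i k))) * g (Some i).
Proof.
  unfold trans. rewrite !FS_app, FS_map, FS_flat_map.
  assert (E: forall k, FS g (if Nat.leb 2 (i k) then [(q k (i k), Some (upd i k (pred (i k))))] else [])
     = if Nat.leb 2 (i k) then q k (i k) * g (Some (upd i k (pred (i k)))) else 0)
   by (intros k; destruct (Nat.leb 2 (i k)); unfold FS; simpl; ring).
  rewrite (sumR_ext _ _ _ (fun k _ => E k)).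
  unfold FS at 1. cbn [fold_right fst snd]. ring.
Qed.

Lemma in_seq1 j d : In j (seq 1 d) <-> (1 <= j <= d)%nat.
Proof. rewrite in_seq. lia. Qed.

Lemma upd_eq i j v : upd i j v j = v.
Proof. unfold upd. rewrite Nat.eqb_refl. auto. Qed.
Lemma upd_neq i j v k : k <> j -> upd i j v k = i k.
Proof. intros. unfold upd. destruct (Nat.eqb_spec k j); [lia|auto]. Qed.

Lemma good_trans d N p q i : Hyp d N p q -> inr d N i ->
  forall py, In py (trans d p q i) ->
  0 <= fst py /\ (fst py = 0 \/ snd py = None \/
     exists g, snd py = Some g /\ inr d N g /\ sameout d g i).
Proof.
  intros H Hi py Hin. unfold trans in Hin. rewrite !in_app_iff in Hin.
  destruct Hin as [Hin|[Hin|Hin]].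
  - apply in_map_iff in Hin as [j [<- Hj]]. apply in_seq1 in Hj. simpl.
    specialize (Hi j Hj) as Hij.
    split; [apply (hp01 _ _ _ _ H); auto; lia|].
    destruct (Nat.eq_dec (i j) (N j)) as [E|E].
    + left. rewrite E. apply (hbd _ _ _ _ H j Hj).
    + right; right. exists (upd i j (S (i j))). split; auto. split.
      * intros k Hk. destruct (Nat.eq_dec k j); [subst; rewrite upd_eq; lia|].
        rewrite upd_neq; auto.
      * intros m Hm. apply upd_neq. intros ->. apply Hm; auto.
  - apply in_flat_map in Hin as [j [Hj Hin]]. apply in_seq1 in Hj.
    specialize (Hi j Hj) as Hij.
    destruct (Nat.leb_spec 2 (i j)); [|contradiction].
    destruct Hin as [<-|[]]. simpl.
    split; [apply (hq01 _ _ _ _ H); auto; lia|].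
    right; right. exists (upd i j (pred (i j))). split; auto. split.
    * intros k Hk. destruct (Nat.eq_dec k j); [subst; rewrite upd_eq; lia|].
      rewrite upd_neq; auto.
    * intros m Hm. apply upd_neq. intros ->. apply Hm; auto.
  - destruct Hin as [<-|[<-|[]]]; simpl.
    + split; [|right; left; auto]. apply sumR_nonneg. intros k Hk. apply in_seq1 in Hk.
      destruct (Nat.eqb (i k) 1); [|lra]. apply (hq01 _ _ _ _ H); auto.
      specialize (hN _ _ _ _ H k Hk). lia.
    + split; [pose proof (hsum _ _ _ _ H i Hi); lra|]. right; right.
      exists i. split; auto. split; auto. intros m _. auto.
Qed.

Lemma Ssum_0 p q j : Ssum p q j 0 = 0.
Proof. reflexivity. Qed.

Lemma Ssum_S p q j m : Ssum p q j (S m) = Ssum p q j m + prodR (seq 1 m) (fun r => q j r / p j r).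
Proof. unfold Ssum. rewrite seq_S, sumR_app. simpl.
  replace (m - 0)%nat with m by lia. ring. Qed.

Lemma Ssum_ge1 d N p q j m : Hyp d N p q -> (1 <= j <= d)%nat -> (1 <= m <= N j)%nat ->
  1 <= Ssum p q j m.
Proof. intros H Hj. induction m as [|m IH]; intros Hm; [lia|].
  rewrite Ssum_S. destruct m as [|m]; [simpl; unfold Ssum; simpl; lra|].
  assert (0 < prodR (seq 1 (S m)) (fun r => q j r / p j r)).
  { apply prodR_pos. intros r Hr. apply in_seq1 in Hr.
    destruct (hpos _ _ _ _ H j r Hj) as [P Q]; [lia|]. apply Rdiv_lt_0_compat; auto. }
  specialize (IH ltac:(lia)). lra. Qed.

Lemma harm1 d N p q j i : Hyp d N p q -> (1 <= j <= d)%nat -> (1 <= i <= N j)%nat ->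
  p j i * (Ssum p q j (S i) - Ssum p q j i) + q j i * (Ssum p q j (pred i) - Ssum p q j i) = 0.
Proof. intros H Hj Hi. destruct i as [|m]; [lia|]. simpl pred.
  rewrite (Ssum_S p q j (S m)), (Ssum_S p q j m), seq_S, prodR_app. simpl.
  destruct (Nat.eq_dec (S m) (N j)) as [E|E].
  - destruct (hbd _ _ _ _ H j Hj) as [_ [_ [P Q]]]. rewrite E, P, Q. ring.
  - destruct (hpos _ _ _ _ H j (S m) Hj) as [P Q]; [lia|].
    field. lra.
Qed.

Lemma prod_fact d j (G : nat -> R) : (1 <= j <= d)%nat -> exists A, forall h : nat -> R,
  (forall k, k <> j -> h k = G k) -> prodR (seq 1 d) h = A * h j.
Proof. intros Hj.
  exists (prodR (seq 1 (j-1)) G * prodR (seq (S j) (d - j)) G).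
  intros h Hh.
  replace (seq 1 d) with (seq 1 (j-1) ++ seq j (S (d - j))).
  2:{ replace j with (1 + (j-1))%nat at 2 by lia. rewrite <- seq_app. f_equal. lia. }
  rewrite prodR_app. simpl.
  rewrite (prodR_ext _ h G), (prodR_ext (seq (S j) (d - j)) h G).
  - ring.
  - intros k Hk; apply in_seq in Hk; apply Hh; lia.
  - intros k Hk; apply in_seq in Hk; apply Hh; lia.
Qed.

Definition rhoS d N p q (f : nat -> nat) : R :=
  prodR (seq 1 d) (fun j => Ssum p q j (f j)) /
  prodR (seq 1 d) (fun j => Ssum p q j (N j)).
Definition rho d N p q (x : option (nat -> nat)) : R :=
  match x with None => 0 | Some f => rhoS d N p q f end.

Lemma D_pos d N p q : Hyp d N p q -> 0 < prodR (seq 1 d) (fun j => Ssum p q j (N j)).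
Proof. intros H. apply prodR_pos. intros k Hk. apply in_seq1 in Hk.
  pose proof (Ssum_ge1 d N p q k (N k) H Hk). specialize (hN _ _ _ _ H k Hk). intros. 
  assert (1 <= Ssum p q k (N k)) by (apply H0; lia). lra. Qed.

Lemma rho_nonneg d N p q f : Hyp d N p q -> inr d N f -> 0 <= rhoS d N p q f.
Proof. intros H Hf. unfold rhoS. apply Rlt_le, Rdiv_lt_0_compat; [|apply D_pos; auto].
  apply prodR_pos. intros k Hk. apply in_seq1 in Hk.
  pose proof (Ssum_ge1 d N p q k (f k) H Hk (Hf k Hk)). lra. Qed.

Lemma sumR_zero l (f : nat -> R) : (forall k, In k l -> f k = 0) -> sumR l f = 0.
Proof. induction l; simpl; intros Hf; auto. rewrite Hf, IHl; auto. ring. Qed.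

Lemma rho_harm d N p q i : Hyp d N p q -> inr d N i ->
  FS (rho d N p q) (trans d p q i) = rhoS d N p q i.
Proof.
  intros H Hi. rewrite fold_trans. cbn [rho].
  set (D := prodR (seq 1 d) (fun j => Ssum p q j (N j))).
  set (R0 := rhoS d N p q i).
  assert (E1 : forall j, In j (seq 1 d) ->
    (if Nat.leb 2 (i j) then q j (i j) * rhoS d N p q (upd i j (pred (i j))) else 0)
    = q j (i j) * rhoS d N p q (upd i j (pred (i j)))).
  { intros j Hj. apply in_seq1 in Hj. destruct (Nat.leb_spec 2 (i j)); auto.
    assert (i j = 1%nat) by (specialize (Hi j Hj); lia).
    destruct (prod_fact d j (fun k => Ssum p q k (i k)) Hj) as [A HA].
    unfold rhoS. rewrite (HA (fun k => Ssum p q k (upd i j (pred (i j)) k))).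
    - rewrite upd_eq, H1. simpl. rewrite Ssum_0. unfold Rdiv. ring.
    - intros k Hk. rewrite upd_neq; auto. }
  rewrite (sumR_ext _ _ _ E1).
  assert (E2 : sumR (seq 1 d) (fun j => (p j (i j) * rhoS d N p q (upd i j (S (i j)))
       + q j (i j) * rhoS d N p q (upd i j (pred (i j)))) + (p j (i j) + q j (i j)) * (- R0)) = 0).
  { apply sumR_zero. intros j Hj. apply in_seq1 in Hj.
    destruct (prod_fact d j (fun k => Ssum p q k (i k)) Hj) as [A HA].
    unfold R0, rhoS. fold D.
    rewrite (HA (fun k => Ssum p q k (upd i j (pred (i j)) k))),
            (HA (fun k => Ssum p q k (upd i j (S (i j)) k))),
            (HA (fun k => Ssum p q k (i k))); auto;
      try (intros k Hk; rewrite upd_neq; auto).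
    rewrite !upd_eq.
    pose proof (harm1 d N p q j (i j) H Hj (Hi j Hj)).
    replace (p j (i j) * (A * Ssum p q j (S (i j)) / D) +
      q j (i j) * (A * Ssum p q j (Init.Nat.pred (i j)) / D) +
      (p j (i j) + q j (i j)) * - (A * Ssum p q j (i j) / D))
    with (A / D * (p j (i j) * (Ssum p q j (S (i j)) - Ssum p q j (i j)) +
       q j (i j) * (Ssum p q j (Init.Nat.pred (i j)) - Ssum p q j (i j)))) by (unfold Rdiv; ring).
    rewrite H0. ring. }
  rewrite sumR_plus, sumR_plus, sumR_scal in E2. lra.
Qed.

Lemma hit_None d N p q n : hit d N p q n None = 0.
Proof. destruct n; reflexivity. Qed.
Lemma hit_top d N p q n i : is_top d N i = true -> hit d N p q n (Some i) = 1.
Proof. intros E; destruct n; simpl; rewrite E; reflexivity. Qed.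
Lemma hit_S d N p q n i : is_top d N i = false ->
  hit d N p q (S n) (Some i) = FS (hit d N p q n) (trans d p q i).
Proof. intros E; simpl; rewrite E; reflexivity. Qed.
Lemma hit_0 d N p q i : is_top d N i = false -> hit d N p q 0 (Some i) = 0.
Proof. intros E; simpl; rewrite E; reflexivity. Qed.

Lemma top_eq d N i : is_top d N i = true -> forall j, (1 <= j <= d)%nat -> i j = N j.
Proof. unfold is_top. rewrite forallb_forall. intros H j Hj.
  apply Nat.eqb_eq, H, in_seq1; auto. Qed.

Lemma rho_top d N p q i : Hyp d N p q -> is_top d N i = true -> rhoS d N p q i = 1.
Proof. intros H E. unfold rhoS.
  rewrite (prodR_ext _ _ (fun j => Ssum p q j (N j))).
  - pose proof (D_pos d N p q H). field. lra.
  - intros k Hk. rewrite (top_eq d N i E k); auto. apply in_seq1; auto. Qed.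

Lemma FS_zerof {A} (l : list (R * A)) : FS (fun _ => 0) l = 0.
Proof. induction l; unfold FS in *; simpl; auto. rewrite IHl; ring. Qed.

Lemma hit_bounds d N p q : Hyp d N p q -> forall n f, inr d N f ->
  0 <= hit d N p q n (Some f) <= rhoS d N p q f.
Proof.
  intros H n. induction n as [|n IH]; intros f Hf.
  - destruct (is_top d N f) eqn:E.
    + rewrite hit_top, rho_top; auto; lra.
    + rewrite hit_0; auto. pose proof (rho_nonneg d N p q f H Hf); lra.
  - destruct (is_top d N f) eqn:E.
    + rewrite hit_top, rho_top; auto; lra.
    + rewrite hit_S; auto. split.
      * rewrite <- (FS_zerof (trans d p q f)). apply FS_mono.
        intros py Hpy. destruct (good_trans d N p q f H Hf py Hpy) as [G1 [G2|[G2|[g [G2 [G3 _]]]]]];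
          split; auto; right; rewrite G2; [rewrite hit_None; lra|apply IH; auto].
      * rewrite <- (rho_harm d N p q f H Hf). apply FS_mono.
        intros py Hpy. destruct (good_trans d N p q f H Hf py Hpy) as [G1 [G2|[G2|[g [G2 [G3 _]]]]]];
          split; auto; right; rewrite G2; [rewrite hit_None; simpl; lra|apply IH; auto].
Qed.

Lemma hit_mono d N p q : Hyp d N p q -> forall n f, inr d N f ->
  hit d N p q n (Some f) <= hit d N p q (S n) (Some f).
Proof.
  intros H n. induction n as [|n IH]; intros f Hf.
  - destruct (is_top d N f) eqn:E.
    + rewrite !hit_top; auto; lra.
    + rewrite hit_0; auto. apply (hit_bounds d N p q H 1 f Hf).
  - destruct (is_top d N f) eqn:E.
    + rewrite !hit_top; auto; lra.
    + rewrite (hit_S _ _ _ _ n), (hit_S _ _ _ _ (S n)); auto. apply FS_mono.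
      intros py Hpy. destruct (good_trans d N p q f H Hf py Hpy) as [G1 [G2|[G2|[g [G2 [G3 _]]]]]];
        split; auto; right; rewrite G2; [rewrite !hit_None; lra|apply IH; auto].
Qed.

Definition Lx d N p q (y : option (nat -> nat)) : R :=
  epsilon (inhabits 0) (fun l => Un_cv (fun n => hit d N p q n y) l).

Lemma cv_const c : Un_cv (fun _ => c) c.
Proof. intros e He; exists 0%nat; intros; unfold R_dist. rewrite Rminus_diag, Rabs_R0; lra. Qed.

Lemma Lx_cv d N p q y : Hyp d N p q -> (y = None \/ exists g, y = Some g /\ inr d N g) ->
  Un_cv (fun n => hit d N p q n y) (Lx d N p q y).
Proof.
  intros H Hy. unfold Lx. apply epsilon_spec. destruct Hy as [->|[g [-> Hg]]].
  - exists 0. intros e He; exists 0%nat; intros; unfold R_dist. rewrite hit_None, Rminus_diag, Rabs_R0; lra.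
  - destruct (growing_cv (fun n => hit d N p q n (Some g))) as [l Hl].
    + intros n. apply hit_mono; auto.
    + exists (rhoS d N p q g). intros x [n ->]. apply (hit_bounds d N p q H n g Hg).
    + exists l; auto.
Qed.

Lemma Lx_None d N p q : Hyp d N p q -> Lx d N p q None = 0.
Proof. intros H. apply (UL_sequence (fun n => hit d N p q n None)).
  - apply Lx_cv; auto.
  - intros e He; exists 0%nat; intros; unfold R_dist. rewrite hit_None, Rminus_diag, Rabs_R0; lra. Qed.

Lemma Lx_top d N p q f : Hyp d N p q -> is_top d N f = true -> Lx d N p q (Some f) = 1.
Proof. intros H E.
  assert (C : Un_cv (fun n => hit d N p q n (Some f)) 1).
  { intros e He; exists 0%nat; intros; unfold R_dist. rewrite hit_top, Rminus_diag, Rabs_R0; auto; lra. }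
  apply (UL_sequence (fun n => hit d N p q n (Some f))); auto.
  unfold Lx. apply epsilon_spec. exists 1; auto. Qed.

Lemma cv_le (u : nat -> R) l c : Un_cv u l -> (forall n, u n <= c) -> l <= c.
Proof. intros H B. destruct (Rle_dec l c) as [|n]; auto.
  destruct (H (l - c)) as [M HM]; [lra|]. specialize (HM M (le_n _)). specialize (B M).
  unfold R_dist in HM. apply Rabs_def2 in HM. lra. Qed.
Lemma cv_ge (u : nat -> R) l c : Un_cv u l -> (forall n, c <= u n) -> c <= l.
Proof. intros H B. destruct (Rle_dec c l) as [|n]; auto.
  destruct (H (c - l)) as [M HM]; [lra|]. specialize (HM M (le_n _)). specialize (B M).
  unfold R_dist in HM. apply Rabs_def2 in HM. lra. Qed.

Lemma Lx_bounds d N p q f : Hyp d N p q -> inr d N f ->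
  0 <= Lx d N p q (Some f) <= rhoS d N p q f.
Proof. intros H Hf. pose proof (Lx_cv d N p q (Some f) H (or_intror (ex_intro _ f (conj eq_refl Hf)))).
  split; [apply (cv_ge _ _ _ H0)|apply (cv_le _ _ _ H0)]; intros n; apply (hit_bounds d N p q H n f Hf). Qed.

Lemma Lx_harm d N p q f : Hyp d N p q -> inr d N f -> is_top d N f = false ->
  FS (Lx d N p q) (trans d p q f) = Lx d N p q (Some f).
Proof. intros H Hf E.
  pose proof (cv_shift _ _ (Lx_cv d N p q (Some f) H (or_intror (ex_intro _ f (conj eq_refl Hf))))) as C1.
  assert (C2 : Un_cv (fun n => FS (hit d N p q n) (trans d p q f)) (FS (Lx d N p q) (trans d p q f))).
  { apply FS_cv. intros py Hpy.
    destruct (good_trans d N p q f H Hf py Hpy) as [G1 [G2|[G2|[g [G2 [G3 _]]]]]]; auto;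
    right; apply Lx_cv; auto. right; exists g; auto. }
  apply (UL_sequence _ _ _ C2). intros e He. destruct (C1 e He) as [M HM]. exists M. intros n Hn.
  rewrite <- hit_S; auto. Qed.

Definition vv d N p q (y : option (nat -> nat)) : R := rho d N p q y - Lx d N p q y.

Lemma FS_sub {A} (g h : A -> R) l : FS (fun y => g y - h y) l = FS g l - FS h l.
Proof. induction l; unfold FS in *; simpl; [ring|]. rewrite IHl; ring. Qed.

Lemma FS_one d N p q i : Hyp d N p q -> inr d N i -> FS (fun _ => 1) (trans d p q i) = 1.
Proof. intros H Hi. rewrite fold_trans.
  assert (sumR (seq 1 d) (fun j => if Nat.leb 2 (i j) then q j (i j) * 1 else 0)
    + sumR (seq 1 d) (fun j => if Nat.eqb (i j) 1 then q j 1%nat else 0)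
    = sumR (seq 1 d) (fun j => q j (i j))).
  { rewrite <- sumR_plus. apply sumR_ext. intros k Hk. apply in_seq1 in Hk. specialize (Hi k Hk).
    destruct (Nat.leb_spec 2 (i k)); destruct (Nat.eqb_spec (i k) 1); try lia.
    - ring.
    - rewrite e. ring. }
  rewrite sumR_plus. 
  assert (sumR (seq 1 d) (fun j => p j (i j) * 1) = sumR (seq 1 d) (fun j => p j (i j)))
    by (apply sumR_ext; intros; ring).
  lra. Qed.

Lemma vv_harm d N p q f : Hyp d N p q -> inr d N f -> is_top d N f = false ->
  FS (vv d N p q) (trans d p q f) = vv d N p q (Some f).
Proof. intros H Hf E. unfold vv. rewrite FS_sub, rho_harm, Lx_harm; auto. Qed.

Fixpoint states (N : nat -> nat) (i : nat -> nat) (k : nat) : list (nat -> nat) :=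
  match k with
  | O => [i]
  | S k' => flat_map (fun g => map (fun v => upd g (S k') v) (seq 1 (N (S k')))) (states N i k')
  end.

Lemma states_complete N i k f : sameout k f i -> inr k N f -> In f (states N i k).
Proof. revert f. induction k as [|k IH]; intros f Hs Hr; simpl.
  - left. apply functional_extensionality. intros m. symmetry. apply Hs. lia.
  - apply in_flat_map. exists (upd f (S k) (i (S k))). split.
    + apply IH.
      * intros m Hm. destruct (Nat.eq_dec m (S k)); [subst; rewrite upd_eq; auto|].
        rewrite upd_neq; auto. apply Hs; lia.
      * intros j Hj. rewrite upd_neq; [|lia]. apply Hr; lia.
    + apply in_map_iff. exists (f (S k)). split.
      * apply functional_extensionality. intros m. unfold upd.
        destruct (Nat.eqb_spec m (S k)); subst; auto.
      * apply in_seq1. apply Hr. lia.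
Qed.

Lemma states_sound N i k f : In f (states N i k) -> sameout k f i /\ inr k N f.
Proof. revert f. induction k as [|k IH]; intros f Hf; simpl in Hf.
  - destruct Hf as [<-|[]]. split; [intros m _; auto|intros j Hj; lia].
  - apply in_flat_map in Hf as [g [Hg Hf]]. apply in_map_iff in Hf as [v [<- Hv]].
    apply in_seq1 in Hv. destruct (IH g Hg) as [S1 S2]. split.
    + intros m Hm. rewrite upd_neq; [apply S1; lia|lia].
    + intros j Hj. destruct (Nat.eq_dec j (S k)); [subst; rewrite upd_eq; lia|].
      rewrite upd_neq; auto. apply S2; lia.
Qed.

Definition distl (N : nat -> nat) (l : list nat) (f : nat -> nat) : nat :=
  fold_right (fun j acc => (N j - f j) + acc)%nat 0%nat l.

Lemma distl_notin N l f j x : ~ In j l -> distl N l (upd f j x) = distl N l f.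
Proof. induction l; simpl; intros Hn; auto. rewrite upd_neq, IHl; auto. Qed.

Lemma distl_up N l f j : NoDup l -> In j l -> (f j < N j)%nat ->
  S (distl N l (upd f j (S (f j)))) = distl N l f.
Proof. induction l as [|a l IH]; simpl; intros Hd Hj Hlt; [contradiction|].
  inversion Hd; subst. destruct Hj as [->|Hj].
  - rewrite upd_eq, distl_notin; auto. lia.
  - rewrite upd_neq; [|intros ->; contradiction]. rewrite <- IH; auto. Qed.

Lemma distl_zero N l f : distl N l f = 0%nat -> forall j, In j l -> (N j <= f j)%nat.
Proof. induction l; simpl; intros H j Hj; [contradiction|].
  destruct Hj as [->|Hj]; [lia|]. apply IHl; auto; lia. Qed.

Lemma forallb_false {A} (g : A -> bool) l : forallb g l = false -> exists x, In x l /\ g x = false.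
Proof. induction l; simpl; intros H; [discriminate|].
  destruct (g a) eqn:E; simpl in H.
  - destruct (IHl H) as [x [H1 H2]]; eauto.
  - exists a; auto. Qed.

Lemma main_eq d N p q i : Hyp d N p q -> inr d N i -> Lx d N p q (Some i) = rhoS d N p q i.
Proof.
  intros H Hi.
  set (Si := states N i d).
  assert (memb : forall g, sameout d g i -> inr d N g -> In g Si).
  { intros g H1 H2. apply states_complete; auto. }
  assert (Hin : In i Si) by (apply memb; auto; intros m _; auto).
  destruct (exists_max Si (fun f => vv d N p q (Some f)) i Hin) as [x [Hx Hmax]].
  remember (vv d N p q (Some x)) as M eqn:HM.
  assert (Vnn : forall f, inr d N f -> 0 <= vv d N p q (Some f)).
  { intros f Hf. unfold vv; simpl. pose proof (Lx_bounds d N p q f H Hf). lra. }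
  assert (M0 : 0 <= M) by (pose proof (Hmax i Hin); pose proof (Vnn i Hi); cbv beta in *; lra).
  assert (key : forall k f, In f Si -> vv d N p q (Some f) = M -> distl N (seq 1 d) f = k -> M = 0).
  { induction k as [|k IH]; intros f Hf Hv Hdist;
      destruct (states_sound N i d f Hf) as [Fs Fr];
      (destruct (is_top d N f) eqn:E;
        [unfold vv in Hv; simpl in Hv; rewrite (rho_top d N p q f), (Lx_top d N p q f) in Hv; auto; lra|]).
    - exfalso. assert (is_top d N f = true); [|congruence].
      unfold is_top. apply forallb_forall. intros j Hj. apply Nat.eqb_eq.
      pose proof (distl_zero N _ f Hdist j Hj). apply in_seq1 in Hj. specialize (Fr j Hj). lia.
    - destruct (forallb_false _ _ E) as [j [Hj Hjf]]. apply Nat.eqb_neq in Hjf.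
      pose proof Hj as Hj'. apply in_seq1 in Hj'. pose proof (Fr j Hj').
      assert (Z : FS (fun y => vv d N p q y - M) (trans d p q f) = 0).
      { rewrite FS_lin, (vv_harm d N p q f), (FS_one d N p q f); auto. rewrite Hv. ring. }
      assert (T : forall py, In py (trans d p q f) -> fst py * (vv d N p q (snd py) - M) <= 0).
      { intros py Hpy. destruct (good_trans d N p q f H Fr py Hpy) as [G1 [G2|[G2|[g [G2 [G3 G4]]]]]].
        - rewrite G2; lra.
        - rewrite G2. unfold vv; simpl. rewrite Lx_None; auto.
          replace (0 - 0 - M) with (- M) by ring. pose proof (Rmult_le_pos _ _ G1 M0). lra.
        - rewrite G2. assert (In g Si).
          { apply memb; auto. intros m Hm. rewrite G4, Fs; auto. }
          pose proof (Hmax g H1) as Hg. assert (Hg2 : vv d N p q (snd py) - M <= 0) by (rewrite G2; lra). rewrite <- G2. pose proof (Rmult_le_compat_l _ _ _ G1 Hg2). lra. }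
      set (up := upd f j (S (f j))).
      assert (Iu : In (p j (f j), Some up) (trans d p q f)).
      { unfold trans. apply in_or_app. left. apply (in_map (fun j0 => (p j0 (f j0), Some (upd f j0 (S (f j0)))))); auto. }
      pose proof (FS_zero_terms _ _ T Z _ Iu) as Zu. simpl in Zu.
      destruct (hpos _ _ _ _ H j (f j) Hj') as [P _]; [lia|].
      assert (Vu : vv d N p q (Some up) = M).
      { apply Rmult_integral in Zu as [Zu|Zu]; lra. }
      apply (IH up); auto.
      + apply memb.
        * intros m Hm. unfold up. rewrite upd_neq; [apply Fs; auto|intros ->; auto].
        * intros k0 Hk. unfold up. destruct (Nat.eq_dec k0 j); [subst; rewrite upd_eq; lia|].
          rewrite upd_neq; auto.
      + pose proof (distl_up N (seq 1 d) f j (seq_NoDup d 1) Hj ltac:(lia)). fold up in H1. lia. }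
  pose proof (key _ x Hx (eq_sym HM) eq_refl).
  pose proof (Hmax i Hin). pose proof (Vnn i Hi). simpl in *. unfold vv in *. simpl in *. lra.
Qed.

Theorem theorem2p1 (d : nat) (N : nat -> nat) (p q : nat -> nat -> R)
  (Hd : (1 <= d)%nat)
  (HN : forall j, (1 <= j <= d)%nat -> (1 <= N j)%nat)
  (Hp01 : forall j i, (1 <= j <= d)%nat -> (i <= N j)%nat -> 0 <= p j i <= 1)
  (Hq01 : forall j i, (1 <= j <= d)%nat -> (i <= N j)%nat -> 0 <= q j i <= 1)
  (Hbd : forall j, (1 <= j <= d)%nat ->
           p j 0%nat = 0 /\ q j 0%nat = 0 /\ p j (N j) = 0 /\ q j (N j) = 0)
  (Hpos : forall j i, (1 <= j <= d)%nat -> (1 <= i <= N j - 1)%nat ->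
           0 < p j i /\ 0 < q j i)
  (Hsum : forall i : nat -> nat, (forall k, (1 <= k <= d)%nat -> (1 <= i k <= N k)%nat) ->
           sumR (seq 1 d) (fun k => p k (i k) + q k (i k)) <= 1) :
  forall i : nat -> nat, (forall j, (1 <= j <= d)%nat -> (1 <= i j <= N j)%nat) ->
    Un_cv (fun n => hit d N p q n (Some i))
      (prodR (seq 1 d) (fun j => Ssum p q j (i j)) /
       prodR (seq 1 d) (fun j => Ssum p q j (N j))).
Proof.
  intros i Hi.
  assert (H : Hyp d N p q) by (constructor; auto).
  change (Un_cv (fun n => hit d N p q n (Some i)) (rhoS d N p q i)).
  rewrite <- main_eq; auto. apply Lx_cv; auto. right; exists i; auto.
Qed.
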